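(* Let $P$ be an orthogonal polygon, let $p$ be a point in the interior of a pixel $\psi$ of $P$, and let $p'$ be any point of $\psi$ (possibly on the boundary of $\psi$). Then $G(p)\subseteq G(p')$. This holds under either of the two conventions (i), (ii) for $r$-guarding.
   Context: An orthogonal polygon $P$ is a closed connected region of the plane whose boundary consists of finitely many axis-parallel segments; it may have holes. The pixelation of $P$ is the partition of $P$ into rectangles obtained by shooting, from every reflex vertex of $P$, a horizontal and a vertical ray into the interior of $P$ until it hits the boundary of $P$; the resulting rectangles are called pixels. For points $g,p$, let $R(g,p)$ be the smallest closed axis-aligned rectangle containing $g$ and $p$. An axis-aligned rectangle $R\subseteq P$ is degenerate if it has area $0$ and there is no axis-aligned rectangle $R'$ of positive area with $R\subset R'\subseteq P$. Two conventions for $r$-guarding are considered: (i) $g$ $r$-guards $p$ iff $R(g,p)\subseteq P$; (ii) $g$ $r$-guards $p$ iff $R(g,p)\subseteq P$ and $R(g,p)$ is not degenerate. The guarding set $G(p)$ of a point $p\in P$ is the set of all points $g\in P$ that $r$-guard $p$. *)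

(* Defs.v *)
From Stdlib Require Import Reals List.
Open Scope R_scope.

Definition point := (R * R)%type.
Definition region := point -> Prop.

Definition near (eps : R) (x y : point) : Prop :=
  Rabs (fst y - fst x) < eps /\ Rabs (snd y - snd x) < eps.

Definition interior (S : region) (x : point) : Prop :=
  exists eps, 0 < eps /\ forall y, near eps x y -> S y.

Definition closure (S : region) (x : point) : Prop :=
  forall eps, 0 < eps -> exists y, S y /\ near eps x y.

Definition boundary (S : region) (x : point) : Prop :=
  closure S x /\ ~ interior S x.

Definition is_closed (S : region) : Prop := forall x, closure S x -> S x.

Definition is_open (S : region) : Prop := forall x, S x -> interior S x.

Definition bounded (S : region) : Prop :=
  exists M, forall x, S x -> Rabs (fst x) <= M /\ Rabs (snd x) <= M.

Definition connected (S : region) : Prop :=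
  ~ exists U V : region,
      is_open U /\ is_open V /\
      (forall x, S x -> U x \/ V x) /\
      (exists x, S x /\ U x) /\ (exists x, S x /\ V x) /\
      (forall x, S x -> U x -> V x -> False).

Record segment := Seg { sx1 : R; sy1 : R; sx2 : R; sy2 : R }.

Definition axis_parallel (s : segment) : Prop := sx1 s = sx2 s \/ sy1 s = sy2 s.

Definition on_segment (s : segment) (x : point) : Prop :=
  Rmin (sx1 s) (sx2 s) <= fst x <= Rmax (sx1 s) (sx2 s) /\
  Rmin (sy1 s) (sy2 s) <= snd x <= Rmax (sy1 s) (sy2 s).

Definition orthogonal_polygon (P : region) : Prop :=
  is_closed P /\ bounded P /\ connected P /\
  (exists x, interior P x) /\
  (forall x, P x -> closure (interior P) x) /\
  exists segs : list segment,
    (forall s, In s segs -> axis_parallel s) /\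
    (forall x, boundary P x <-> exists s, In s segs /\ on_segment s x).

Definition closed_rect (a b c d : R) (x : point) : Prop :=
  a <= fst x <= b /\ c <= snd x <= d.

Definition open_rect (a b c d : R) (x : point) : Prop :=
  a < fst x < b /\ c < snd x < d.

Definition sgn (b : bool) : R := if b then 1 else -1.

Definition quadrant (v : point) (eps : R) (sx sy : bool) (x : point) : Prop :=
  0 < sgn sx * (fst x - fst v) < eps /\ 0 < sgn sy * (snd x - snd v) < eps.

Definition reflex_vertex (P : region) (v : point) (sx sy : bool) : Prop :=
  exists eps, 0 < eps /\
    (forall x, quadrant v eps sx sy x -> ~ P x) /\
    (forall x, quadrant v eps (negb sx) sy x -> P x) /\
    (forall x, quadrant v eps sx (negb sy) x -> P x) /\
    (forall x, quadrant v eps (negb sx) (negb sy) x -> P x).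

Definition ray_cut (P : region) (v : point) (dx dy : R) (x : point) : Prop :=
  exists t, 0 <= t /\
    (forall s, 0 < s < t -> interior P (fst v + s * dx, snd v + s * dy)) /\
    x = (fst v + t * dx, snd v + t * dy).

(* For a reflex vertex with missing quadrant (sx, sy), the incident edges go in
   directions (sx,0) and (0,sy); the rays extend them into the interior, i.e.
   they go in directions (-sx,0) and (0,-sy). *)
Definition cuts (P : region) (x : point) : Prop :=
  exists v sx sy, reflex_vertex P v sx sy /\
    (ray_cut P v (- sgn sx) 0 x \/ ray_cut P v 0 (- sgn sy) x).

(* [a,b] x [c,d] is a pixel of P: a rectangle of positive area contained in P,
   whose interior meets no cut and whose boundary lies on the cuts or on the
   boundary of P (i.e. a face of the partition of P induced by the cuts). *)
Definition pixel (P : region) (a b c d : R) : Prop :=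
  a < b /\ c < d /\
  (forall x, closed_rect a b c d x -> P x) /\
  (forall x, open_rect a b c d x -> ~ cuts P x) /\
  (forall x, closed_rect a b c d x -> ~ open_rect a b c d x ->
             cuts P x \/ boundary P x).

Definition Rgp (g p : point) : region :=
  closed_rect (Rmin (fst g) (fst p)) (Rmax (fst g) (fst p))
              (Rmin (snd g) (snd p)) (Rmax (snd g) (snd p)).

Definition subset (A B : region) : Prop := forall x, A x -> B x.

Definition degenerate (P : region) (a b c d : R) : Prop :=
  (b - a) * (d - c) = 0 /\
  ~ exists a' b' c' d', a' < b' /\ c' < d' /\
      subset (closed_rect a b c d) (closed_rect a' b' c' d') /\
      (exists x, closed_rect a' b' c' d' x /\ ~ closed_rect a b c d x) /\
      subset (closed_rect a' b' c' d') P.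

Inductive convention := ConvI | ConvII.

Definition r_guards (cv : convention) (P : region) (g p : point) : Prop :=
  match cv with
  | ConvI => subset (Rgp g p) P
  | ConvII => subset (Rgp g p) P /\
      ~ degenerate P (Rmin (fst g) (fst p)) (Rmax (fst g) (fst p))
                     (Rmin (snd g) (snd p)) (Rmax (snd g) (snd p))
  end.

Definition guard_set (cv : convention) (P : region) (p : point) : region :=
  fun g => P g /\ r_guards cv P g p.

(* Main.v *)
Require Import Defs.
From Stdlib Require Import Reals Lra Classical List.
Require Import Defs.
Open Scope R_scope.
Import ListNotations.


Lemma near_intro e x y : fst y - fst x < e -> fst x - fst y < e ->
  snd y - snd x < e -> snd x - snd y < e -> near e x y.
Proof. intros; split; apply Rabs_def1; lra. Qed.

Lemma near_elim e x y : near e x y -> fst y - fst x < e /\ fst x - fst y < e /\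
  snd y - snd x < e /\ snd x - snd y < e.
Proof. intros [H1 H2]; apply Rabs_def2 in H1; apply Rabs_def2 in H2; lra. Qed.

Lemma lub_ex (E : R -> Prop) (ub : R) : (forall t, E t -> t <= ub) -> (exists t, E t) ->
  exists m, (forall t, E t -> t <= m) /\ (forall b, (forall t, E t -> t <= b) -> m <= b) /\
    (forall eta, 0 < eta -> exists t, E t /\ m - eta < t).
Proof.
  intros Hb Hne. destruct (completeness E) as [m [Hub Hl]].
  - exists ub; intros t Ht; auto.
  - exact Hne.
  - exists m; split; [exact Hub|split; [exact Hl|]].
    intros eta He. apply NNPP; intro Hn.
    assert (is_upper_bound E (m - eta)).
    { intros t Et. destruct (Rle_dec t (m - eta)); auto.
      exfalso; apply Hn; exists t; split; auto; lra. }
    specialize (Hl _ H); lra.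
Qed.

Lemma glb_ex (E : R -> Prop) (lb : R) : (forall t, E t -> lb <= t) -> (exists t, E t) ->
  exists m, (forall t, E t -> m <= t) /\ lb <= m /\
    (forall eta, 0 < eta -> exists t, E t /\ t < m + eta).
Proof.
  intros Hb [t0 Ht0].
  destruct (lub_ex (fun u => E (- u)) (- lb)) as [m [H1 [H2 H3]]].
  - intros t Ht; specialize (Hb _ Ht); lra.
  - exists (- t0); rewrite Ropp_involutive; auto.
  - exists (- m); split; [|split].
    + intros t Ht. assert (- t <= m) by (apply H1; rewrite Ropp_involutive; auto). lra.
    + assert (m <= - lb) by (apply H2; intros t Ht; specialize (Hb _ Ht); lra). lra.
    + intros eta He. destruct (H3 eta He) as [t [Ht Hlt]]. exists (- t); split; auto; lra.
Qed.

Lemma compl_open P : is_closed P -> forall w, ~ P w -> exists r, 0 < r /\ forall u, near r w u -> ~ P u.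
Proof.
  intros Hc w Hw. apply NNPP; intro Hn. apply Hw, Hc. intros eps He.
  apply NNPP; intro Hn2. apply Hn. exists eps; split; auto.
  intros u Hu Pu. apply Hn2; exists u; auto.
Qed.

Definition segpt (y z : point) (t : R) : point :=
  (fst y + t * (fst z - fst y), snd y + t * (snd z - snd y)).

Lemma segpt_near y z t t' eps :
  Rabs (t - t') * (Rabs (fst z - fst y) + Rabs (snd z - snd y) + 1) < eps ->
  near eps (segpt y z t) (segpt y z t').
Proof.
  intros H. unfold segpt, near; simpl.
  assert (HA : 0 <= Rabs (t - t')) by apply Rabs_pos.
  assert (Hx : 0 <= Rabs (fst z - fst y)) by apply Rabs_pos.
  assert (Hy : 0 <= Rabs (snd z - snd y)) by apply Rabs_pos.
  split.
  - replace (fst y + t' * (fst z - fst y) - (fst y + t * (fst z - fst y)))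
      with ((t' - t) * (fst z - fst y)) by ring.
    rewrite Rabs_mult, Rabs_minus_sym.
    assert (Rabs (t - t') * Rabs (fst z - fst y) <=
            Rabs (t - t') * (Rabs (fst z - fst y) + Rabs (snd z - snd y) + 1)).
    { apply Rmult_le_compat_l; lra. }
    lra.
  - replace (snd y + t' * (snd z - snd y) - (snd y + t * (snd z - snd y)))
      with ((t' - t) * (snd z - snd y)) by ring.
    rewrite Rabs_mult, Rabs_minus_sym.
    assert (Rabs (t - t') * Rabs (snd z - snd y) <=
            Rabs (t - t') * (Rabs (fst z - fst y) + Rabs (snd z - snd y) + 1)).
    { apply Rmult_le_compat_l; lra. }
    lra.
Qed.

Lemma near_refl e x : 0 < e -> near e x x.
Proof. intros; apply near_intro; lra. Qed.

Lemma L_seg P y z : is_closed P -> P y -> ~ P z ->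
  exists t, 0 <= t <= 1 /\ boundary P (segpt y z t).
Proof.
  intros Hc Py Pz.
  set (D := Rabs (fst z - fst y) + Rabs (snd z - snd y) + 1).
  assert (HD : 0 < D).
  { unfold D; pose proof (Rabs_pos (fst z - fst y)); pose proof (Rabs_pos (snd z - snd y)); lra. }
  set (E := fun t => 0 <= t <= 1 /\ P (segpt y z t)).
  assert (E0 : E 0).
  { split; [lra|]. replace (segpt y z 0) with y; auto.
    destruct y; unfold segpt; simpl; f_equal; ring. }
  destruct (lub_ex E 1) as [m [H1 [H2 H3]]].
  - intros t [Ht _]; lra.
  - exists 0; auto.
  - assert (Hm0 : 0 <= m) by (apply H1; auto).
    assert (Hm1 : m <= 1) by (apply H2; intros t [Ht _]; lra).
    assert (Pm : P (segpt y z m)).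
    { apply Hc. intros eps He.
      destruct (H3 (eps / D)) as [t [Et Ht]].
      { apply Rdiv_lt_0_compat; lra. }
      exists (segpt y z t); split; [apply Et|].
      apply segpt_near. fold D.
      assert (t <= m) by (apply H1; auto).
      rewrite Rabs_right by lra.
      apply Rmult_lt_reg_r with (/ D).
      { apply Rinv_0_lt_compat; lra. }
      rewrite Rmult_assoc, Rinv_r by lra. unfold Rdiv in Ht. lra. }
    assert (Hm1' : m < 1).
    { destruct (Req_dec m 1) as [e|]; [|lra]. exfalso; apply Pz.
      replace z with (segpt y z m); auto. subst m. destruct z; unfold segpt; simpl; f_equal; ring. }
    exists m; split; [lra|]. split.
    + intros eps He; exists (segpt y z m); split; auto; apply near_refl; auto.
    + intros [eps [He Hi]].
      set (h := Rmin ((1 - m) / 2) (eps / (2 * D))).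
      assert (Hh1 : h <= (1 - m) / 2) by apply Rmin_l.
      assert (Hh2 : h <= eps / (2 * D)) by apply Rmin_r.
      assert (Hh0 : 0 < h).
      { unfold h; apply Rmin_glb_lt; [lra|]. apply Rdiv_lt_0_compat; lra. }
      assert (E (m + h)).
      { split; [lra|]. apply Hi. apply segpt_near. fold D.
        replace (m - (m + h)) with (- h) by ring. rewrite Rabs_Ropp, Rabs_right by lra.
        assert (h * D <= eps / (2 * D) * D) by (apply Rmult_le_compat_r; lra).
        replace (eps / (2 * D) * D) with (eps / 2) in H by (field; lra). lra. }
      specialize (H1 _ H); lra.
Qed.

Definition H2prop (P : region) := forall v, exists eps, 0 < eps /\
  forall x, near eps v x -> boundary P x -> fst x = fst v \/ snd x = snd v.

Lemma sgn_bound s w e : 0 < sgn s * w < e -> w <> 0 /\ - e < w < e.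
Proof. destruct s; simpl; intros; (split; [intro Hw; rewrite Hw in *; lra | lra]). Qed.

Lemma convex_in A B t e : 0 < A < e -> 0 < B < e -> 0 <= t <= 1 -> 0 < (1 - t) * A + t * B < e.
Proof.
  intros HA HB Ht.
  assert (0 <= (1 - t) * A) by (apply Rmult_le_pos; lra).
  assert (0 <= t * B) by (apply Rmult_le_pos; lra).
  assert (0 <= (1 - t) * (e - A)) by (apply Rmult_le_pos; lra).
  assert (0 <= t * (e - B)) by (apply Rmult_le_pos; lra).
  destruct (Rle_lt_dec t (1/2)).
  - assert ((1/2) * A <= (1 - t) * A) by (apply Rmult_le_compat_r; lra).
    assert ((1/2) * (e - A) <= (1 - t) * (e - A)) by (apply Rmult_le_compat_r; lra).
    split; nra.
  - assert ((1/2) * B <= t * B) by (apply Rmult_le_compat_r; lra).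
    assert ((1/2) * (e - B) <= t * (e - B)) by (apply Rmult_le_compat_r; lra).
    split; nra.
Qed.

Lemma quad_mono v e1 e2 sx sy x : quadrant v e1 sx sy x -> e1 <= e2 -> quadrant v e2 sx sy x.
Proof. unfold quadrant; intros; lra. Qed.

Lemma L_quad P : is_closed P -> H2prop P -> forall v, exists eps, 0 < eps /\
  forall sx sy, (forall x, quadrant v eps sx sy x -> P x) \/
                (forall x, quadrant v eps sx sy x -> ~ P x).
Proof.
  intros Hc H2 v. destruct (H2 v) as [eps [He Hb]]. exists eps; split; auto.
  intros sx sy.
  destruct (classic (exists z, quadrant v eps sx sy z /\ ~ P z)) as [[z [Qz Pz]]|Hn].
  - right. intros x Qx Px.
    destruct (L_seg P x z Hc Px Pz) as [t [Ht Hbd]].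
    destruct Qx as [Qx1 Qx2]; destruct Qz as [Qz1 Qz2].
    assert (A1 : 0 < sgn sx * (fst (segpt x z t) - fst v) < eps).
    { unfold segpt; simpl.
      replace (sgn sx * (fst x + t * (fst z - fst x) - fst v)) with
        ((1 - t) * (sgn sx * (fst x - fst v)) + t * (sgn sx * (fst z - fst v))) by ring.
      apply convex_in; auto. }
    assert (A2 : 0 < sgn sy * (snd (segpt x z t) - snd v) < eps).
    { unfold segpt; simpl.
      replace (sgn sy * (snd x + t * (snd z - snd x) - snd v)) with
        ((1 - t) * (sgn sy * (snd x - snd v)) + t * (sgn sy * (snd z - snd v))) by ring.
      apply convex_in; auto. }
    apply sgn_bound in A1; apply sgn_bound in A2.
    destruct (Hb (segpt x z t)) as [Hq|Hq]; auto.
    + apply near_intro; lra.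
    + apply (proj1 A1); lra.
    + apply (proj1 A2); lra.
  - left. intros x Qx. apply NNPP; intro Px. apply Hn; exists x; auto.
Qed.

Definition gpos (r : R) : R := if Req_EM_T r 0 then 1 else Rabs r.

Lemma gpos_pos r : 0 < gpos r.
Proof. unfold gpos; destruct (Req_EM_T r 0); [lra|]. apply Rabs_pos_lt; auto. Qed.

Lemma gpos_le r : r <> 0 -> gpos r <= Rabs r.
Proof. unfold gpos; destruct (Req_EM_T r 0); intros; [contradiction|lra]. Qed.

Lemma pos_min_list (f : segment -> R) (l : list segment) : (forall s, 0 < f s) ->
  exists e, 0 < e /\ forall s, In s l -> e <= f s.
Proof.
  intros Hf; induction l as [|s l IH].
  - exists 1; split; [lra|]; intros s [].
  - destruct IH as [e [He Hl]]. exists (Rmin e (f s)); split.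
    + apply Rmin_glb_lt; auto.
    + intros s' [<-|Hin].
      * apply Rmin_r.
      * eapply Rle_trans; [apply Rmin_l|]; auto.
Qed.

Lemma H2_poly P : orthogonal_polygon P -> H2prop P.
Proof.
  intros [_ [_ [_ [_ [_ [segs [Hax Hb]]]]]]] v.
  set (f := fun s => Rmin (gpos (sx1 s - fst v)) (gpos (sy1 s - snd v))).
  destruct (pos_min_list f segs) as [e [He Hl]].
  { intros s; unfold f; apply Rmin_glb_lt; apply gpos_pos. }
  exists e; split; auto. intros x Hn Hbx.
  apply Hb in Hbx. destruct Hbx as [s [Hin Hon]].
  specialize (Hl s Hin). unfold f in Hl.
  pose proof (Rmin_l (gpos (sx1 s - fst v)) (gpos (sy1 s - snd v))).
  pose proof (Rmin_r (gpos (sx1 s - fst v)) (gpos (sy1 s - snd v))).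
  destruct Hn as [Hn1 Hn2].
  destruct Hon as [[Ho1 Ho2] [Ho3 Ho4]].
  destruct (Hax s Hin) as [Hv|Hh].
  - rewrite <- Hv in Ho1, Ho2. rewrite Rmin_left in Ho1 by lra. rewrite Rmax_left in Ho2 by lra.
    assert (fst x = sx1 s) by lra.
    destruct (Req_dec (sx1 s - fst v) 0) as [E|E].
    + left; lra.
    + exfalso. pose proof (gpos_le _ E). rewrite H1 in Hn1. lra.
  - rewrite <- Hh in Ho3, Ho4. rewrite Rmin_left in Ho3 by lra. rewrite Rmax_left in Ho4 by lra.
    assert (snd x = sy1 s) by lra.
    destruct (Req_dec (sy1 s - snd v) 0) as [E|E].
    + right; lra.
    + exfalso. pose proof (gpos_le _ E). rewrite H1 in Hn2. lra.
Qed.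


Definition mxp (z : point) : point := (- fst z, snd z).
Definition swp (z : point) : point := (snd z, fst z).
Definition Pmx (P : region) : region := fun z => P (mxp z).
Definition Psw (P : region) : region := fun z => P (swp z).

Lemma mxp_inv z : mxp (mxp z) = z.
Proof. destruct z; unfold mxp; simpl; rewrite Ropp_involutive; auto. Qed.
Lemma swp_inv z : swp (swp z) = z.
Proof. destruct z; reflexivity. Qed.

Lemma mxp_near e x y : near e (mxp x) (mxp y) <-> near e x y.
Proof.
  unfold near, mxp; simpl.
  replace (- fst y - - fst x) with (- (fst y - fst x)) by ring. rewrite Rabs_Ropp. tauto.
Qed.
Lemma swp_near e x y : near e (swp x) (swp y) <-> near e x y.
Proof. unfold near, swp; simpl; tauto. Qed.

Lemma interior_tr (s : point -> point) (sinv : forall z, s (s z) = z)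
  (snear : forall e x y, near e (s x) (s y) <-> near e x y) (P : region) (x : point) :
  interior (fun z : point => P (s z)) x <-> interior P (s x).
Proof.
  split; intros [eps [He H]]; exists eps; split; auto.
  - intros y Hy. rewrite <- (sinv y). apply H. apply snear. rewrite sinv; auto.
  - intros y Hy. apply H. apply snear; auto.
Qed.

Lemma closure_tr (s : point -> point) (sinv : forall z, s (s z) = z)
  (snear : forall e x y, near e (s x) (s y) <-> near e x y) (P : region) (x : point) :
  closure (fun z : point => P (s z)) x <-> closure P (s x).
Proof.
  split; intros H eps He; destruct (H eps He) as [y [Py Hy]].
  - exists (s y); split; auto. apply snear; auto.
  - exists (s y); split; [rewrite sinv; auto|]. apply snear; rewrite sinv; auto.
Qed.

Lemma boundary_tr (s : point -> point) (sinv : forall z, s (s z) = z)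
  (snear : forall e x y, near e (s x) (s y) <-> near e x y) (P : region) (x : point) :
  boundary (fun z : point => P (s z)) x <-> boundary P (s x).
Proof. unfold boundary; rewrite (closure_tr s sinv snear), (interior_tr s sinv snear); tauto. Qed.

Lemma closed_tr (s : point -> point) (sinv : forall z, s (s z) = z)
  (snear : forall e x y, near e (s x) (s y) <-> near e x y) (P : region) :
  is_closed P -> is_closed (fun z : point => P (s z)).
Proof. intros H x Hx. apply H. apply (closure_tr s sinv snear); auto. Qed.

Lemma H2_tr (s : point -> point) (sinv : forall z, s (s z) = z)
  (snear : forall e x y, near e (s x) (s y) <-> near e x y)
  (sline : forall x v, fst (s x) = fst (s v) \/ snd (s x) = snd (s v) ->
  fst x = fst v \/ snd x = snd v) (P : region) :
  H2prop P -> H2prop (fun z : point => P (s z)).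
Proof.
  intros H v. destruct (H (s v)) as [eps [He Hb]]. exists eps; split; auto.
  intros x Hx Hbx. apply sline. apply Hb.
  - apply snear; auto.
  - apply (boundary_tr s sinv snear); auto.
Qed.

Lemma sgn_negb b : sgn (negb b) = - sgn b.
Proof. destruct b; simpl; ring. Qed.

Lemma quad_mx v e sx sy x : quadrant (mxp v) e (negb sx) sy (mxp x) <-> quadrant v e sx sy x.
Proof. unfold quadrant, mxp; simpl. rewrite sgn_negb.
  replace (- sgn sx * (- fst x - - fst v)) with (sgn sx * (fst x - fst v)) by ring. tauto. Qed.

Lemma quad_sw v e sx sy x : quadrant (swp v) e sy sx (swp x) <-> quadrant v e sx sy x.
Proof. unfold quadrant, swp; simpl; tauto. Qed.

Lemma reflex_mx P v sx sy : reflex_vertex (Pmx P) v sx sy -> reflex_vertex P (mxp v) (negb sx) sy.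
Proof.
  intros [eps [He [H1 [H2 [H3 H4]]]]]. exists eps; split; auto.
  split; [|split; [|split]]; intros x Hq; rewrite <- (mxp_inv x) in Hq |- *.
  - apply (proj1 (quad_mx _ _ _ _ _)) in Hq. exact (H1 _ Hq).
  - apply (proj1 (quad_mx _ _ _ _ _)) in Hq. exact (H2 _ Hq).
  - apply (proj1 (quad_mx _ _ _ _ _)) in Hq. exact (H3 _ Hq).
  - apply (proj1 (quad_mx _ _ _ _ _)) in Hq. exact (H4 _ Hq).
Qed.

Lemma reflex_sw P v sx sy : reflex_vertex (Psw P) v sx sy -> reflex_vertex P (swp v) sy sx.
Proof.
  intros [eps [He [H1 [H2 [H3 H4]]]]]. exists eps; split; auto.
  split; [|split; [|split]]; intros x Hq; rewrite <- (swp_inv x) in Hq |- *.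
  - apply (proj1 (quad_sw _ _ _ _ _)) in Hq. exact (H1 _ Hq).
  - apply (proj1 (quad_sw _ _ _ _ _)) in Hq. exact (H3 _ Hq).
  - apply (proj1 (quad_sw _ _ _ _ _)) in Hq. exact (H2 _ Hq).
  - apply (proj1 (quad_sw _ _ _ _ _)) in Hq. exact (H4 _ Hq).
Qed.

Lemma ray_mx P v dx dy x dx' : dx' = - dx -> ray_cut (Pmx P) v dx dy x -> ray_cut P (mxp v) dx' dy (mxp x).
Proof.
  intros Hd [t [Ht [Hi Hx]]]. subst. exists t; split; auto; split.
  - intros s Hs. specialize (Hi s Hs). apply (interior_tr mxp mxp_inv mxp_near) in Hi.
    replace (fst (mxp v) + s * - dx, snd (mxp v) + s * dy) with
      (mxp (fst v + s * dx, snd v + s * dy)); auto.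
    unfold mxp; simpl; f_equal; ring.
  - unfold mxp; simpl; f_equal; ring.
Qed.

Lemma ray_sw P v dx dy x : ray_cut (Psw P) v dx dy x -> ray_cut P (swp v) dy dx (swp x).
Proof.
  intros [t [Ht [Hi Hx]]]. subst. exists t; split; auto; split.
  - intros s Hs. specialize (Hi s Hs). apply (interior_tr swp swp_inv swp_near) in Hi. exact Hi.
  - reflexivity.
Qed.

Lemma cuts_mx P x : cuts (Pmx P) x -> cuts P (mxp x).
Proof.
  intros [v [sx [sy [Hr Hc]]]]. exists (mxp v), (negb sx), sy; split.
  - apply reflex_mx; auto.
  - destruct Hc as [Hc|Hc].
    + left. eapply ray_mx; [|exact Hc]. rewrite sgn_negb; ring.
    + right. eapply ray_mx; [|exact Hc]. ring.
Qed.

Lemma cuts_sw P x : cuts (Psw P) x -> cuts P (swp x).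
Proof.
  intros [v [sx [sy [Hr Hc]]]]; exists (swp v), sy, sx; split.
  - apply reflex_sw; auto.
  - destruct Hc as [Hc|Hc].
    + right. apply ray_sw; auto.
    + left. apply ray_sw; auto.
Qed.

Lemma CI_tr (s : point -> point) (sinv : forall z, s (s z) = z)
  (snear : forall e x y, near e (s x) (s y) <-> near e x y) (P : region) :
  (forall x, P x -> closure (interior P) x) ->
  (forall x, P (s x) -> closure (interior (fun z : point => P (s z))) x).
Proof.
  intros H x Px. specialize (H _ Px).
  apply (closure_tr s sinv snear (interior P)) in H.
  intros eps He. destruct (H eps He) as [y [Hy Hn]]. exists y; split; auto.
  apply (interior_tr s sinv snear); auto.
Qed.

Definition Good (P : region) (a b c d : R) : Prop :=
  a < b /\ c < d /\ is_closed P /\ H2prop P /\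
  (forall x, closed_rect a b c d x -> P x) /\
  (forall x, open_rect a b c d x -> ~ cuts P x) /\
  (forall x, P x -> closure (interior P) x).

Lemma Good_mx P a b c d : Good P a b c d -> Good (Pmx P) (- b) (- a) c d.
Proof.
  intros [Hab [Hcd [Hc [H2 [HR [HN HCI]]]]]]. split; [lra|split; [lra|split; [|split; [|split; [|split]]]]].
  - apply (closed_tr mxp mxp_inv mxp_near); auto.
  - apply (H2_tr mxp mxp_inv mxp_near); auto.
    all: intros x v; unfold mxp; simpl; intros [H|H]; [left|right]; lra.
  - intros x Hx; apply HR. unfold closed_rect, mxp in *; simpl; lra.
  - intros x Hx Hcu. apply (HN (mxp x)).
    + unfold open_rect, mxp in *; simpl; lra.
    + apply cuts_mx; auto.
  - apply (CI_tr mxp mxp_inv mxp_near); auto.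
Qed.

Lemma Good_sw P a b c d : Good P a b c d -> Good (Psw P) c d a b.
Proof.
  intros [Hab [Hcd [Hc [H2 [HR [HN HCI]]]]]]. split; [lra|split; [lra|split; [|split; [|split; [|split]]]]].
  - apply (closed_tr swp swp_inv swp_near); auto.
  - apply (H2_tr swp swp_inv swp_near); auto.
    all: intros x v; unfold swp; simpl; tauto.
  - intros x Hx; apply HR. unfold closed_rect, swp in *; simpl; lra.
  - intros x Hx Hcu. apply (HN (swp x)).
    + unfold open_rect, swp in *; simpl; lra.
    + apply cuts_sw; auto.
  - apply (CI_tr swp swp_inv swp_near); auto.
Qed.


Lemma pos_min_R (l : list R) : (forall r, In r l -> 0 < r) ->
  exists e, 0 < e /\ forall r, In r l -> e <= r.
Proof.
  induction l as [|r l IH]; intros Hp.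
  - exists 1; split; [lra|]; intros r [].
  - destruct IH as [e [He Hl]]. { intros r' Hr'; apply Hp; simpl; auto. }
    exists (Rmin e r); split.
    + apply Rmin_glb_lt; auto. apply Hp; simpl; auto.
    + intros r' [<-|Hin].
      * apply Rmin_r.
      * eapply Rle_trans; [apply Rmin_l|]; auto.
Qed.

Lemma half_min r1 r2 : 0 < r1 -> 0 < r2 ->
  0 < Rmin r1 r2 / 2 /\ Rmin r1 r2 / 2 <= r1 / 2 /\ Rmin r1 r2 / 2 <= r2 / 2.
Proof.
  intros. pose proof (Rmin_l r1 r2). pose proof (Rmin_r r1 r2).
  pose proof (Rmin_glb_lt r1 r2 0 H H0). lra.
Qed.

Lemma seg_lemma P a b c d xs gy :
  Good P a b c d -> a < xs < b -> gy < c ->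
  (forall y, gy <= y <= c -> P (xs, y)) ->
  exists dl, 0 < dl /\ forall x y, xs - dl < x < xs + dl -> gy <= y <= c -> P (x, y).
Proof.
  intros [Hab [Hcd [Hcl [HH2 [HCR [HNC HCI]]]]]] Hxs Hgy HS.
  apply NNPP; intro Hn0.
  set (C := fun x y => gy <= y <= c /\ ~ P (x, y)).
  assert (Hacc : forall dl, 0 < dl -> exists x y, C x y /\ xs - dl < x < xs + dl).
  { intros dl Hdl. apply NNPP; intro Hn. apply Hn0. exists dl; split; auto.
    intros x y Hx Hy. apply NNPP; intro Hp. apply Hn. exists x, y; split; [split|]; auto. }
  set (U := fun u => exists dl, 0 < dl /\ forall x y, C x y -> xs - dl < x < xs + dl -> y <= u).
  destruct (glb_ex U gy) as [yT [HY1 [HYgy HY2]]].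
  { intros u [dl [Hdl Hu]]. destruct (Hacc dl Hdl) as [x [y [Cy Hx]]].
    pose proof (Hu _ _ Cy Hx). destruct Cy as [? _]. lra. }
  { exists c, 1; split; [lra|]. intros x y [? _] _; lra. }
  assert (HyTc : yT <= c).
  { apply HY1. exists 1; split; [lra|]. intros x y [? _] _; lra. }
  assert (HY3 : forall w, w < yT -> forall dl, 0 < dl ->
            exists x y, C x y /\ xs - dl < x < xs + dl /\ w < y).
  { intros w Hw dl Hdl. apply NNPP; intro Hn.
    assert (U w).
    { exists dl; split; auto. intros x y Hc Hx. destruct (Rle_lt_dec y w); auto.
      exfalso; apply Hn; exists x, y; auto. }
    apply HY1 in H; lra. }
  destruct (L_quad P Hcl HH2 (xs, yT)) as [eps0 [He0 HQ]].
  destruct (pos_min_R [eps0; xs - a; b - xs; d - c]) as [e1 [He1 Hle1]].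
  { intros r Hr; simpl in Hr; repeat destruct Hr as [<-|Hr]; try lra; destruct Hr. }
  assert (Ha1 : e1 <= eps0) by (apply Hle1; simpl; auto).
  assert (Ha2 : e1 <= xs - a) by (apply Hle1; simpl; auto 10).
  assert (Ha3 : e1 <= b - xs) by (apply Hle1; simpl; auto 10).
  assert (Ha4 : e1 <= d - c) by (apply Hle1; simpl; auto 10).
  assert (UP : forall sx, forall x, quadrant (xs, yT) eps0 sx true x -> P x).
  { intros sx. destruct (HQ sx true) as [Hin|Hout]; auto. exfalso.
    destruct (Rlt_le_dec yT c) as [HyT|HyT].
    - destruct (half_min e1 (c - yT) He1 ltac:(lra)) as [Hh0 [Hh1 Hh2]].
      set (h := Rmin e1 (c - yT) / 2) in *.
      destruct (HY2 h Hh0) as [u [[dl [Hdl Hu]] Hult]].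
      destruct (half_min dl e1 Hdl He1) as [Hk0 [Hk1 Hk2]].
      set (k := Rmin dl e1 / 2) in *.
      assert (Ck : C (xs + sgn sx * k) (yT + h)).
      { split; [lra|]. apply Hout. unfold quadrant; simpl.
        destruct sx; simpl; lra. }
      pose proof (Hu _ _ Ck ltac:(destruct sx; simpl; lra)). lra.
    - apply (Hout (xs + sgn sx * (e1 / 2), yT + e1 / 2)).
      + unfold quadrant; simpl; destruct sx; simpl; lra.
      + apply HCR; unfold closed_rect; simpl; destruct sx; simpl; lra. }
  destruct (HY2 e1 He1) as [u [[dl [Hdl Hu]] Hult]].
  destruct (half_min dl e1 Hdl He1) as [Hm0 [Hm1 Hm2]].
  destruct (HY3 (yT - e1) ltac:(lra) (Rmin dl e1 / 2) Hm0)
    as [xq [yq [Cq [Hxq Hyq]]]].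
  pose proof (Hu _ _ Cq ltac:(lra)) as Hyqu.
  assert (Hxqs : xq <> xs).
  { intro E; subst xq. destruct Cq as [Cq1 Cq2]. apply Cq2, HS. auto. }
  assert (Hsx : exists sx, 0 < sgn sx * (xq - xs)).
  { destruct (Rtotal_order xq xs) as [Ht1|[Ht1|Ht1]].
    - exists false; simpl; lra.
    - contradiction.
    - exists true; simpl; lra. }
  destruct Hsx as [sx Hsx].
  assert (Hsxb : sgn sx * (xq - xs) < e1) by (destruct sx; simpl in *; lra).
  assert (Hyq2 : yq < yT).
  { destruct (Rlt_le_dec yq yT) as [|Hge]; auto. exfalso.
    destruct Cq as [Cq1 Cq3].
    destruct (Rle_lt_or_eq_dec _ _ Hge) as [Hgt|Heq].
    - apply Cq3; apply (UP sx); unfold quadrant; simpl; lra.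
    - destruct (compl_open P Hcl _ Cq3) as [r [Hr Hn]].
      destruct (half_min r e1 Hr He1) as [Hr0 [Hr1 Hr2]].
      set (m := Rmin r e1 / 2) in *.
      apply (Hn (xq, yT + m)).
      + apply near_intro; simpl; lra.
      + apply (UP sx); unfold quadrant; simpl; lra. }
  assert (LO : forall x, quadrant (xs, yT) eps0 sx false x -> ~ P x).
  { destruct (HQ sx false) as [Hin|Hout]; auto. exfalso.
    destruct Cq as [_ Cq3]. apply Cq3, Hin. unfold quadrant; simpl; lra. }
  assert (HgyT : gy < yT) by (destruct Cq as [? _]; lra).
  assert (LI : forall x, quadrant (xs, yT) eps0 (negb sx) false x -> P x).
  { destruct (HQ (negb sx) false) as [Hin|Hout]; auto. exfalso.
    destruct (half_min e1 (yT - gy) He1 ltac:(lra)) as [Hs0 [Hs1 Hs2]].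
    set (s := Rmin e1 (yT - gy) / 2) in *.
    assert (Pw : P (xs, yT - s)) by (apply HS; lra).
    destruct (HCI _ Pw (s / 2) ltac:(lra)) as [[ux uy] [Hui Hun]].
    apply near_elim in Hun; simpl in Hun.
    assert (Pu : P (ux, uy)).
    { destruct Hui as [r [Hr Hri]]. apply Hri. apply near_refl; auto. }
    destruct (Rtotal_order (sgn sx * (ux - xs)) 0) as [Ht1|[Ht1|Ht1]].
    - apply (Hout (ux, uy)); auto. unfold quadrant; simpl. rewrite sgn_negb.
      destruct sx; simpl in *; lra.
    - destruct Hui as [r [Hr Hri]].
      destruct (half_min r s Hr Hs0) as [Hq0 [Hq1 Hq2]].
      set (q := Rmin r s / 2) in *.
      apply (LO (ux + sgn sx * q, uy)).
      + unfold quadrant; simpl. destruct sx; simpl in *; lra.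
      + apply Hri. apply near_intro; simpl; destruct sx; simpl in *; lra.
    - apply (LO (ux, uy)); auto. unfold quadrant; simpl. destruct sx; simpl in *; lra. }
  assert (Hrefl : reflex_vertex P (xs, yT) sx false).
  { exists e1; split; auto. split; [|split; [|split]]; intros x Hq.
    - apply LO. eapply quad_mono; eauto.
    - apply LI. eapply quad_mono; eauto.
    - apply UP with sx. eapply quad_mono; eauto.
    - apply UP with (negb sx). eapply quad_mono; eauto. }
  assert (Hint : forall y, yT < y < (c + d) / 2 -> interior P (xs, y)).
  { intros y Hy. destruct (Rlt_le_dec c y) as [Hyc|Hyc].
    - destruct (pos_min_R [xs - a; b - xs; y - c; d - y]) as [r [Hr Hler]].
      { intros r Hr; simpl in Hr; repeat destruct Hr as [<-|Hr]; try lra; destruct Hr. }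
      assert (r <= xs - a) by (apply Hler; simpl; auto 10).
      assert (r <= b - xs) by (apply Hler; simpl; auto 10).
      assert (r <= y - c) by (apply Hler; simpl; auto 10).
      assert (r <= d - y) by (apply Hler; simpl; auto 10).
      exists r; split; auto. intros z Hz. apply near_elim in Hz; simpl in Hz.
      apply HCR; unfold closed_rect; lra.
    - destruct (HY2 (y - yT) ltac:(lra)) as [u' [[dl' [Hdl' Hu']] Hult']].
      assert (yT <= u') by (apply HY1; exists dl'; auto).
      destruct (pos_min_R [dl'; y - u'; xs - a; b - xs; d - c]) as [r [Hr Hler]].
      { intros r Hr; simpl in Hr; repeat destruct Hr as [<-|Hr]; try lra; destruct Hr. }
      assert (r <= dl') by (apply Hler; simpl; auto 10).
      assert (r <= y - u') by (apply Hler; simpl; auto 10).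
      assert (r <= xs - a) by (apply Hler; simpl; auto 10).
      assert (r <= b - xs) by (apply Hler; simpl; auto 10).
      assert (r <= d - c) by (apply Hler; simpl; auto 10).
      exists r; split; auto. intros [zx zy] Hz. apply near_elim in Hz; simpl in Hz.
      apply NNPP; intro Hn. destruct (Rlt_le_dec c zy).
      + apply Hn, HCR; unfold closed_rect; simpl; lra.
      + assert (Cz : C zx zy) by (split; [lra|auto]).
        pose proof (Hu' _ _ Cz ltac:(lra)). lra. }
  set (t := (c - yT) + (d - c) / 2).
  apply (HNC (xs + t * 0, yT + t * - sgn false)).
  - unfold open_rect, sgn; simpl. unfold t. split; lra.
  - exists (xs, yT), sx, false. split; auto. right.
    exists t. split; [unfold t; lra|split].
    + intros s Hs. simpl.
      replace (xs + s * 0) with xs by ring.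
      replace (yT + s * - (-1)) with (yT + s) by ring.
      apply Hint. unfold t in Hs. lra.
    + reflexivity.
Qed.

Lemma core P a b c d gy px :
  Good P a b c d -> a < px < b -> gy < c ->
  (forall y, gy <= y <= c -> P (px, y)) ->
  forall z, px <= fst z < b -> gy <= snd z <= c -> P z.
Proof.
  intros HG Hpx Hgy HS [x1 y0] Hz0x Hz0y; simpl in *.
  pose proof HG as [Hab [Hcd [Hcl _]]].
  set (E := fun x => px <= x <= x1 /\ forall x' y, px <= x' <= x -> gy <= y <= c -> P (x', y)).
  destruct (lub_ex E x1) as [m [H1 [H2 H3]]].
  { intros t [Ht _]; lra. }
  { exists px; split; [lra|]. intros x' y Hx' Hy. replace x' with px by lra. auto. }
  assert (Hpm : px <= m) by (apply H1; split; [lra|]; intros x' y Hx' Hy; replace x' with px by lra; auto).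
  assert (Hm1 : m <= x1) by (apply H2; intros t [Ht _]; lra).
  assert (Em : forall x' y, px <= x' <= m -> gy <= y <= c -> P (x', y)).
  { intros x' y Hx' Hy. destruct (Rle_lt_or_eq_dec _ _ (proj2 Hx')) as [Hlt|Heq].
    - destruct (H3 (m - x') ltac:(lra)) as [t [[Ht Hq] Hlt2]]. apply Hq; lra.
    - subst x'. apply Hcl. intros eps He.
      destruct (H3 eps He) as [t [[Ht Hq] Hlt2]].
      assert (t <= m) by (apply H1; split; auto).
      exists (t, y); split; [apply Hq; lra|]. apply near_intro; simpl; lra. }
  destruct (Rlt_le_dec m x1) as [Hlt|Hge].
  - exfalso.
    destruct (seg_lemma P a b c d m gy HG ltac:(lra) Hgy ltac:(intros y Hy; apply Em; auto; lra))
      as [dl [Hdl Hd]].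
    destruct (half_min dl (x1 - m) Hdl ltac:(lra)) as [Hk0 [Hk1 Hk2]].
    set (k := Rmin dl (x1 - m) / 2) in *.
    assert (E (m + k)).
    { split; [lra|]. intros x' y Hx' Hy. destruct (Rle_lt_dec x' m).
      - apply Em; lra.
      - apply Hd; lra. }
    apply H1 in H; lra.
  - apply Em; lra.
Qed.


Lemma btw u v w : Rmin u v <= w <= Rmax u v <-> (u <= w <= v \/ v <= w <= u).
Proof. unfold Rmin, Rmax; destruct (Rle_dec u v); split; intros; lra. Qed.

Lemma fillR P a b c d xs gy py zx zy : Good P a b c d -> a < xs < b -> c < py < d ->
  xs <= zx < b -> (gy <= zy <= py \/ py <= zy <= gy) ->
  (forall y, (gy <= y <= py \/ py <= y <= gy) -> P (xs, y)) -> P (zx, zy).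
Proof.
  intros HG Hxs Hpy Hzx Hzy HS.
  pose proof HG as [Hab [Hcd [Hcl [HH2 [HCR _]]]]].
  destruct (Rle_lt_dec c zy) as [Hc1|Hc1]; [destruct (Rle_lt_dec zy d) as [Hd1|Hd1]|].
  - apply HCR; unfold closed_rect; simpl; lra.
  - assert (Hgy : d < gy) by (destruct Hzy; lra).
    pose proof (Good_sw _ _ _ _ _ (Good_mx _ _ _ _ _ (Good_sw P a b c d HG))) as HG'.
    pose proof (core _ _ _ _ _ (- gy) xs HG' Hxs ltac:(lra)) as Hc.
    assert (H := Hc ltac:(intros y Hy; unfold Psw, Pmx, swp, mxp; simpl;
                   apply HS; right; lra) (zx, - zy) ltac:(simpl; lra) ltac:(simpl; lra)).
    unfold Psw, Pmx, swp, mxp in H; simpl in H. rewrite Ropp_involutive in H. exact H.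
  - assert (Hgy : gy < c) by (destruct Hzy; lra).
    apply (core _ _ _ _ _ gy xs HG Hxs Hgy); simpl; try lra.
    all: try (intros y Hy; apply HS; left; lra).
    all: destruct Hzy; lra.
Qed.

Lemma K1 P a b c d gx gy px py mx :
  Good P a b c d -> a < px < b -> c < py < d -> a < mx < b ->
  subset (Rgp (gx, gy) (px, py)) P -> subset (Rgp (gx, gy) (mx, py)) P.
Proof.
  intros HG Hpx Hpy Hmx Hsub [zx zy] Hz.
  unfold Rgp, closed_rect in Hz; simpl in Hz. rewrite !btw in Hz. destruct Hz as [Hzx Hzy].
  assert (Hs : forall wx wy, (gx <= wx <= px \/ px <= wx <= gx) ->
             (gy <= wy <= py \/ py <= wy <= gy) -> P (wx, wy)).
  { intros wx wy H1 H2. apply Hsub. unfold Rgp, closed_rect; simpl; rewrite !btw; auto. }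
  destruct (classic (gx <= zx <= px \/ px <= zx <= gx)) as [Hin|Hout].
  { apply Hs; auto. }
  assert (HR : (gx < zx /\ px < zx) \/ (zx < gx /\ zx < px)).
  { destruct (Rlt_le_dec gx zx), (Rlt_le_dec px zx).
    - left; auto.
    - exfalso; apply Hout; left; lra.
    - exfalso; apply Hout; right; lra.
    - destruct (Req_dec zx gx); [exfalso; apply Hout; right; lra|].
      destruct (Req_dec zx px); [exfalso; apply Hout; left; lra|].
      right; lra. }
  destruct HR as [[H1 H2]|[H1 H2]].
  - assert (Hzb : zx <= mx) by (destruct Hzx; lra).
    destruct (Rle_lt_dec gx px).
    + apply (fillR P a b c d px gy py); auto; try lra.
      intros y Hy; apply Hs; auto; lra.
    + apply (fillR P a b c d gx gy py); auto; try lra.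
      intros y Hy; apply Hs; auto; lra.
  - assert (Hza : mx <= zx) by (destruct Hzx; lra).
    pose proof (Good_mx _ _ _ _ _ HG) as HG'.
    destruct (Rle_lt_dec gx px).
    + pose proof (fillR _ _ _ _ _ (- gx) gy py (- zx) zy HG' ltac:(lra) Hpy ltac:(lra) Hzy) as H.
      unfold Pmx, mxp in H; simpl in H. rewrite !Ropp_involutive in H. apply H.
      intros y Hy. apply Hs; auto; lra.
    + pose proof (fillR _ _ _ _ _ (- px) gy py (- zx) zy HG' ltac:(lra) Hpy ltac:(lra) Hzy) as H.
      unfold Pmx, mxp in H; simpl in H. rewrite !Ropp_involutive in H. apply H.
      intros y Hy. apply Hs; auto; lra.
Qed.


Lemma K2 P a b c d g px py my :
  Good P a b c d -> a < px < b -> c < py < d -> c < my < d ->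
  subset (Rgp g (px, py)) P -> subset (Rgp g (px, my)) P.
Proof.
  intros HG Hpx Hpy Hmy Hsub. destruct g as [gx gy].
  pose proof (K1 (Psw P) c d a b gy gx py px my (Good_sw _ _ _ _ _ HG) Hpy Hpx Hmy) as H.
  assert (Hs : subset (Rgp (gy, gx) (py, px)) (Psw P)).
  { intros [w1 w2] Hw; unfold Psw, swp; simpl; apply Hsub.
    unfold Rgp, closed_rect in *; simpl in *; tauto. }
  specialize (H Hs). intros [z1 z2] Hz. apply (H (z2, z1)).
  unfold Rgp, closed_rect in *; simpl in *; tauto.
Qed.

Lemma Kopen P a b c d g p q :
  Good P a b c d -> open_rect a b c d p -> open_rect a b c d q ->
  subset (Rgp g p) P -> subset (Rgp g q) P.
Proof.
  intros HG [Hp1 Hp2] [Hq1 Hq2] Hs. destruct p as [p1 p2], q as [q1 q2]; simpl in *.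
  destruct g as [gx gy].
  apply (K2 P a b c d (gx, gy) q1 p2 q2 HG Hq1 Hp2 Hq2).
  apply (K1 P a b c d gx gy p1 p2 q1 HG Hp1 Hp2 Hq1 Hs).
Qed.

Lemma open_near a b u e : a < b -> a <= u <= b -> 0 < e ->
  exists u', a < u' < b /\ Rabs (u' - u) < e.
Proof.
  intros Hab Hu He.
  destruct (half_min e (b - a) He ltac:(lra)) as [H0 [H1 H2]].
  set (h := Rmin e (b - a) / 2) in *.
  destruct (Req_dec u a).
  - exists (a + h); split; [lra|]. apply Rabs_def1; lra.
  - destruct (Req_dec u b).
    + exists (b - h); split; [lra|]. apply Rabs_def1; lra.
    + exists u; split; [lra|]. apply Rabs_def1; lra.
Qed.

Lemma clamp1 g u w w' e : Rmin g w <= u <= Rmax g w -> Rabs (w' - w) < e ->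
  exists u', Rmin g w' <= u' <= Rmax g w' /\ Rabs (u' - u) < e.
Proof.
  intros Hu Hw. apply Rabs_def2 in Hw. rewrite btw in Hu.
  assert (0 < e) by lra.
  destruct (classic (Rmin g w' <= u <= Rmax g w')) as [Hin|Hout].
  - exists u; split; auto. apply Rabs_def1; lra.
  - exists w'; split.
    + rewrite btw; destruct (Rle_dec g w'); [left|right]; lra.
    + rewrite btw in Hout. apply Rabs_def1.
      * destruct Hu as [Hu|Hu]; destruct (Rle_dec g w');
          try (exfalso; apply Hout; (left; lra) || (right; lra)); lra.
      * destruct Hu as [Hu|Hu]; destruct (Rle_dec g w');
          try (exfalso; apply Hout; (left; lra) || (right; lra)); lra.
Qed.

Lemma Kclosed P a b c d g p q :
  Good P a b c d -> open_rect a b c d p -> closed_rect a b c d q ->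
  subset (Rgp g p) P -> subset (Rgp g q) P.
Proof.
  intros HG Hp [Hq1 Hq2] Hs z Hz.
  pose proof HG as [Hab [Hcd [Hcl _]]].
  apply Hcl. intros eps He.
  destruct (open_near a b (fst q) eps Hab Hq1 He) as [q1 [Hq1' Hd1]].
  destruct (open_near c d (snd q) eps Hcd Hq2 He) as [q2 [Hq2' Hd2]].
  destruct Hz as [Hz1 Hz2].
  destruct (clamp1 _ _ _ q1 eps Hz1 Hd1) as [u1 [Hu1 Hn1]].
  destruct (clamp1 _ _ _ q2 eps Hz2 Hd2) as [u2 [Hu2 Hn2]].
  exists (u1, u2); split.
  - apply (Kopen P a b c d g p (q1, q2) HG Hp (conj Hq1' Hq2') Hs).
    split; simpl; auto.
  - split; simpl; auto.
Qed.

Lemma zero_side u v w : Rmax u v - Rmin u v = 0 -> Rmin u v <= w <= Rmax u v -> w = u.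
Proof. unfold Rmin, Rmax; destruct (Rle_dec u v); intros; lra. Qed.

Lemma pick1 a b g w : a < b -> a <= w <= b -> exists q, a <= q <= b /\ q <> g /\
  Rmin g q <= Rmin g w /\ Rmax g w <= Rmax g q.
Proof.
  intros Hab Hw. destruct (Req_dec w g) as [E|E].
  - subst w. destruct (Req_dec a g) as [E2|E2].
    + exists b; split; [lra|split; [lra|]]. unfold Rmin, Rmax;
        repeat destruct (Rle_dec _ _); lra.
    + exists a; split; [lra|split; [auto|]]. unfold Rmin, Rmax;
        repeat destruct (Rle_dec _ _); lra.
  - exists w; split; [auto|split; [auto|lra]].
Qed.

Lemma neq_lt u v : u <> v -> Rmin u v < Rmax u v.
Proof. intros H; unfold Rmin, Rmax; destruct (Rle_dec u v); destruct (Rtotal_order u v) as [?|[?|?]]; lra. Qed.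

Theorem lemmaA1 :
  forall (cv : convention) (P : region), orthogonal_polygon P ->
  forall a b c d : R, pixel P a b c d ->
  forall p p' : point, open_rect a b c d p -> closed_rect a b c d p' ->
  subset (guard_set cv P p) (guard_set cv P p').
Proof.
  intros cv P HP a b c d Hpix p p' Hp Hp' g [Pg Hr].
  assert (HG : Good P a b c d).
  { destruct Hpix as [Hab [Hcd [HCR [HNC _]]]].
    pose proof HP as [Hcl [_ [_ [_ [HCI _]]]]].
    repeat split; auto. apply H2_poly; auto. }
  split; auto.
  destruct cv; simpl in Hr |- *.
  - apply (Kclosed P a b c d g p p' HG Hp Hp' Hr).
  - destruct Hr as [Hsub _].
    assert (Hsub' := Kclosed P a b c d g p p' HG Hp Hp' Hsub).
    split; auto.
    intros [Harea Hno]. apply Hno.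
    destruct Hp' as [Hp1 Hp2]. pose proof HG as [Hab [Hcd _]].
    destruct (pick1 a b (fst g) (fst p') Hab Hp1) as [q1 [Hq1 [Hn1 [Hm1 HM1]]]].
    destruct (pick1 c d (snd g) (snd p') Hcd Hp2) as [q2 [Hq2 [Hn2 [Hm2 HM2]]]].
    assert (Hsq := Kclosed P a b c d g p (q1, q2) HG Hp (conj Hq1 Hq2) Hsub).
    exists (Rmin (fst g) q1), (Rmax (fst g) q1), (Rmin (snd g) q2), (Rmax (snd g) q2).
    split; [apply neq_lt; auto|]. split; [apply neq_lt; auto|]. split; [|split].
    + intros z [Hz1 Hz2]; split; lra.
    + apply Rmult_integral in Harea. destruct Harea as [E|E].
      * exists (q1, snd g). split.
        -- split; simpl; rewrite btw; [destruct (Rle_dec (fst g) q1); [left|right]; lra|destruct (Rle_dec (snd g) q2); [left|right]; lra].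
        -- intros [Hz1 Hz2]; simpl in Hz1. apply Hn1. apply (zero_side _ _ _ E Hz1).
      * exists (fst g, q2). split.
        -- split; simpl; rewrite btw; [destruct (Rle_dec (fst g) q1); [left|right]; lra|destruct (Rle_dec (snd g) q2); [left|right]; lra].
        -- intros [Hz1 Hz2]; simpl in Hz2. apply Hn2. apply (zero_side _ _ _ E Hz2).
    + exact Hsq.
Qed.
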